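(* Let $G$ be a connected graph, let $e=\{x,y\}$ and $f=\{u,v\}$ be edges of $G$, and consider the edges $e_{\bar{x}}=\{\bar{x},\overline{xy}\}$ and $f_{\bar{u}}=\{\bar{u},\overline{uv}\}$ of the full subdivision $S(G)$. If $e_{\bar{x}}\,\Theta_{S(G)}\,f_{\bar{u}}$, then $e\,\Theta_G\,f$.
   Context: For a connected graph $H$ with shortest-path distance $d_H$, two edges $\{x,y\}$ and $\{u,v\}$ of $H$ are in relation $\Theta_H$ (the Djoković–Winkler relation) if $d_H(x,u)+d_H(y,v)\neq d_H(x,v)+d_H(y,u)$. The full subdivision $S(G)$ of $G$ is obtained by subdividing every edge of $G$ exactly once; the vertex of $S(G)$ corresponding to a vertex $x$ of $G$ is denoted $\bar{x}$, and the new vertex subdividing the edge $\{x,y\}$ is denoted $\overline{xy}$. For an edge $e=\{x,y\}$ of $G$, $e_{\bar{x}}$ denotes the edge $\{\bar{x},\overline{xy}\}$ of $S(G)$ and $e_{\bar{y}}$ the edge $\{\bar{y},\overline{xy}\}$. *)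

(* Defs.v *)
From mathcomp Require Import all_boot.
Set Implicit Arguments. Unset Strict Implicit. Unset Printing Implicit Defensive.

Definition simple_graph (T : finType) (g : rel T) :=
  symmetric g /\ irreflexive g.

Definition connected_graph (T : finType) (g : rel T) :=
  forall a b : T, connect g a b.

Definition walk_of_len (T : finType) (g : rel T) (a b : T) (n : nat) : bool :=
  [exists p : n.-tuple T, path g a p && (last a p == b)].

(* shortest-path distance: least n admitting a walk of length n from a to b
   (in a connected graph such an n < #|T| always exists) *)
Definition dist (T : finType) (g : rel T) (a b : T) : nat :=
  find (walk_of_len g a b) (iota 0 #|T|).

Definition theta (T : finType) (g : rel T) (a b c d : T) : bool :=
  g a b && g c d &&
  (dist g a c + dist g b d != dist g a d + dist g b c).

Definition is_edge (T : finType) (g : rel T) (S : {set T}) : bool :=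
  [exists x, exists y, g x y && (S == [set x; y])].

Definition edge (T : finType) (g : rel T) := {S : {set T} | is_edge g S}.

(* vertices of the full subdivision S(G): inl x = \bar{x}, inr E = \bar{xy} *)
Definition subdiv_vertex (T : finType) (g : rel T) : finType :=
  (T + edge g)%type.

Definition subdiv_rel (T : finType) (g : rel T) : rel (subdiv_vertex g) :=
  fun a b => match a, b with
             | inl x, inr E => x \in val E
             | inr E, inl x => x \in val E
             | _, _ => false
             end.
Arguments subdiv_rel {T} g.
Arguments subdiv_vertex {T} g.

(* Main.v *)
Require Import Defs.
From mathcomp Require Import all_boot.
From mathcomp Require Import zify.
Set Implicit Arguments. Unset Strict Implicit.

Section Gen.
Variables (T : finType) (g : rel T).

Lemma walkP a b n : reflect (exists p : seq T, [/\ size p = n, path g a p & last a p = b])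
  (walk_of_len g a b n).
Proof.
apply: (iffP existsP).
- move=> [p /andP[Hp /eqP Hl]]. exists (val p). by rewrite size_tuple.
- move=> [p [Hs Hp Hl]]. have Ht : size p == n by rewrite Hs.
  exists (Tuple Ht). by rewrite /= Hp Hl eqxx.
Qed.

Lemma walk0 a : walk_of_len g a a 0.
Proof. apply/walkP; by exists [::]. Qed.

Lemma walk_cons a c b n : g a c -> walk_of_len g c b n -> walk_of_len g a b n.+1.
Proof.
move=> Hac /walkP [p [Hs Hp Hl]]. apply/walkP; exists (c :: p).
by rewrite /= Hs Hac Hp Hl.
Qed.

Lemma walk_cat a b c n m : walk_of_len g a b n -> walk_of_len g b c m ->
  walk_of_len g a c (n + m).
Proof.
move=> /walkP [p [Hs Hp Hl]] /walkP [q [Hs' Hq Hl']]. apply/walkP; exists (p ++ q).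
by rewrite size_cat cat_path last_cat Hl Hs Hs' Hp Hq Hl'.
Qed.

Lemma walk0_eq a b : walk_of_len g a b 0 -> a = b.
Proof. by move=> /walkP [[|c p] [Hs Hp Hl]]. Qed.

Lemma walk_S a b n : walk_of_len g a b n.+1 ->
  exists2 c, g a c & walk_of_len g c b n.
Proof.
move=> /walkP [[|c p] [Hs Hp Hl]] //=. move: Hp => /= /andP [Hac Hp].
exists c => //. apply/walkP; exists p. by case: Hs.
Qed.

Lemma find_le a b m : m < #|T| -> walk_of_len g a b m -> dist g a b <= m.
Proof.
move=> Hm Pm. rewrite /dist. case: leqP => // H.
have := before_find 0 H. by rewrite nth_iota // add0n Pm.
Qed.

Lemma walk_short a b n : walk_of_len g a b n ->
  exists2 m, m < #|T| & (m <= n) && walk_of_len g a b m.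
Proof.
move=> W. case: (ltnP n #|T|) => Hn; first by exists n; rewrite ?leqnn ?W.
move: W => /walkP [p [Hs Hp Hl]]. move: Hl. case: (shortenP Hp) => p' Hp' Hu _ Hl.
have Hc : size (a :: p') <= #|T|.
  by move/card_uniqP: Hu => <-; apply: max_card.
exists (size p') => //. apply/andP; split; first by move: Hc Hn => /= Hc Hn; apply: leq_trans Hn; apply: ltnW.
apply/walkP; by exists p'.
Qed.

Lemma dist_le a b n : walk_of_len g a b n -> dist g a b <= n.
Proof.
move=> /walk_short [m Hm /andP [Hmn W]]. exact: leq_trans (find_le Hm W) Hmn.
Qed.

Lemma dist_walk a b n : walk_of_len g a b n -> walk_of_len g a b (dist g a b).
Proof.
move=> /walk_short [m Hm /andP [_ W]].
have Hh : has (walk_of_len g a b) (iota 0 #|T|).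
  by apply/hasP; exists m => //; rewrite mem_iota.
have := nth_find 0 Hh. rewrite nth_iota //.
by rewrite has_find size_iota in Hh.
Qed.

Lemma lip_walk (phi : T -> nat) : (forall s t, g s t -> phi t <= (phi s).+1) ->
  forall a b n, walk_of_len g a b n -> phi b <= phi a + n.
Proof.
move=> Hl a b n /walkP [p [<- Hp <-]]. elim: p a Hp => [|c p IH] a /=.
  by rewrite addn0.
move/andP=> [Hac Hp]. have := IH c Hp. have := Hl _ _ Hac. lia.
Qed.

Lemma dist_ge (phi : T -> nat) : (forall s t, g s t -> phi t <= (phi s).+1) ->
  forall a b n, walk_of_len g a b n -> phi b <= phi a + dist g a b.
Proof. move=> Hl a b n W. apply: lip_walk Hl _ _ _ (dist_walk W). Qed.

End Gen.

Local Opaque dist.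

Section Sub.
Variables (T : finType) (g : rel T).
Hypothesis Hsym : symmetric g.
Hypothesis Hirr : irreflexive g.
Hypothesis Hconn : connected_graph g.

Local Notation d := (dist g).
Local Notation gs := (subdiv_rel g).
Local Notation ds := (dist (subdiv_rel g)).

Lemma walk_conn a b : walk_of_len g a b (d a b).
Proof.
case/connectP: (Hconn a b) => p Hp Hl. apply: (dist_walk (n := size p)).
apply/walkP; by exists p.
Qed.

Lemma d_refl a : d a a = 0.
Proof. by apply/eqP; rewrite -leqn0; apply: dist_le (walk0 g a). Qed.

Lemma d_edge a b : g a b -> d a b <= 1.
Proof. move=> H; apply: dist_le; apply: walk_cons H (walk0 g b). Qed.

Lemma d_tri a b c : d a c <= d a b + d b c.
Proof. apply: dist_le; exact: walk_cat (walk_conn a b) (walk_conn b c). Qed.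

Lemma d_eq0 a b : d a b = 0 -> a = b.
Proof. move=> H; have := walk_conn a b; rewrite H; exact: walk0_eq. Qed.

Lemma ends_ex (E : edge g) : exists xy : T * T, g xy.1 xy.2 && (val E == [set xy.1; xy.2]).
Proof. case: E => S /= /existsP [a /existsP [b H]]. by exists (a, b). Qed.

Definition ends (E : edge g) : T * T := xchoose (ends_ex E).

Lemma endsP (E : edge g) : g (ends E).1 (ends E).2 /\ val E = [set (ends E).1; (ends E).2].
Proof. by have /andP [H /eqP H'] := xchooseP (ends_ex E). Qed.

Lemma in_ends (E : edge g) z : z \in val E -> z = (ends E).1 \/ z = (ends E).2.
Proof. have [_ ->] := endsP E. by move/set2P. Qed.

Lemma ends_eq (E : edge g) a b (F : T -> nat) : val E = [set a; b] ->
  minn (F (ends E).1) (F (ends E).2) = minn (F a) (F b).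
Proof.
have [Hg Hv] := endsP E. move=> Hab.
have H1 : (ends E).1 \in [set a; b] by rewrite -Hab Hv set21.
have H2 : (ends E).2 \in [set a; b] by rewrite -Hab Hv set22.
move: Hg; case/set2P: H1 => ->; case/set2P: H2 => -> Hg;
  [by rewrite Hirr in Hg | by [] | by rewrite minnC | by rewrite Hirr in Hg].
Qed.

Definition phi (p : T) (s : subdiv_vertex g) : nat :=
  match s with
  | inl z => 2 * d p z
  | inr E => (2 * minn (d p (ends E).1) (d p (ends E).2)).+1
  end.

Lemma phi_lip p s t : gs s t -> phi p t <= (phi p s).+1.
Proof.
have key : forall (E : edge g) z, z \in val E ->
   minn (d p (ends E).1) (d p (ends E).2) <= d p z <=
   (minn (d p (ends E).1) (d p (ends E).2)).+1.
  move=> E z Hz. have [Hg _] := endsP E.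
  have := d_tri p (ends E).1 (ends E).2. have := d_tri p (ends E).2 (ends E).1.
  have := d_edge Hg. rewrite Hsym in Hg. have := d_edge Hg.
  case: (in_ends Hz) => ->; lia.
case: s => [z|E]; case: t => [z'|E'] //= Hz; have := key _ _ Hz; lia.
Qed.

Lemma lift a b n : walk_of_len g a b n -> walk_of_len gs (inl a) (inl b) (2 * n).
Proof.
elim: n a => [|n IH] a.
  by move/walk0_eq => ->; apply: walk0.
move/walk_S => [c Hac W].
have He : is_edge g [set a; c].
  by apply/existsP; exists a; apply/existsP; exists c; rewrite Hac eqxx.
have -> : 2 * n.+1 = (2 * n).+2 by lia.
pose E : edge g := exist (fun S => is_edge g S) [set a; c] He.
apply: (@walk_cons _ gs _ (inr E)); first by rewrite /= set21.
apply: (@walk_cons _ gs _ (inl c)); first by rewrite /= set22.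
exact: IH.
Qed.

Lemma walk_phi p t : walk_of_len gs (inl p) t (phi p t).
Proof.
case: t => [q|E] /=; first exact: lift (walk_conn p q).
have [z Hz ->] : exists2 z, z \in val E &
   minn (d p (ends E).1) (d p (ends E).2) = d p z.
  have [_ Hv] := endsP E. rewrite Hv.
  case: (leqP (d p (ends E).1) (d p (ends E).2)) => H.
    exists (ends E).1; [by rewrite set21 | lia].
  exists (ends E).2; [by rewrite set22 | lia].
rewrite -addn1. apply: walk_cat (lift (walk_conn p z)) _.
apply: walk_cons (walk0 _ _). by [].
Qed.

Lemma ds_inl p t : ds (inl p) t = phi p t.
Proof.
have W := walk_phi p t. apply/eqP; rewrite eqn_leq (dist_le W) /=.
have := dist_ge (@phi_lip p) W. by rewrite /= d_refl.
Qed.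

Lemma walk_inl p t : walk_of_len gs (inl p) t (ds (inl p) t).
Proof. exact: dist_walk (walk_phi p t). Qed.

Lemma min_aux k A B : k < A.+1 -> k < B.+1 -> (A <= k \/ B <= k) -> k.+1 = (minn A B).+1.
Proof. lia. Qed.

Lemma ds_inr (E : edge g) t : t != inr E ->
  ds (inr E) t = (minn (ds (inl (ends E).1) t) (ds (inl (ends E).2) t)).+1.
Proof.
move=> Ht. have [_ Hv] := endsP E.
have Wz : forall z, z \in val E -> walk_of_len gs (inr E) t (ds (inl z) t).+1.
  by move=> z Hz; apply: walk_cons (walk_inl z t).
have M1 : (ends E).1 \in val E by rewrite Hv set21.
have M2 : (ends E).2 \in val E by rewrite Hv set22.
have U1 := dist_le (Wz _ M1).
have U2 := dist_le (Wz _ M2).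
have W := dist_walk (Wz _ M1).
move: W. case H: (ds (inr E) t) => [|k].
  by move/walk0_eq => Ht'; rewrite Ht' eqxx in Ht.
move/walk_S => [[z|E'] Hz W]; last by [].
have L := dist_le W. rewrite H in U1 U2.
apply: (min_aux U1 U2).
have Hz2 : z \in val E := Hz.
case: (in_ends Hz2) => Hz'.
 rewrite Hz' in L. left. exact: L.
 rewrite Hz' in L. right. exact: L.
Qed.

Lemma key x y u v (Exy Euv : edge g) :
    g x y -> g u v ->
    val Exy = [set x; y] -> val Euv = [set u; v] ->
    theta gs (inl x) (inr Exy) (inl u) (inr Euv) ->
    theta g x y u v.
Proof.
move=> Hxy Huv Ex Eu /andP [_ Hne]. rewrite /theta Hxy Huv /=.
apply/negP => /eqP Heq. move: Hne.
have A : ds (inl x) (inl u) = 2 * d x u by rewrite ds_inl.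
have B : ds (inl x) (inr Euv) = (2 * minn (d x u) (d x v)).+1.
  by rewrite ds_inl /= (ends_eq (d x) Eu).
have C : ds (inr Exy) (inl u) = (2 * minn (d x u) (d y u)).+1.
  rewrite ds_inr // !ds_inl /=.
  have := ends_eq (fun z => d z u) Ex. simpl. lia.
have T1 := d_tri x u v. have T2 := d_tri x v u. have T3 := d_tri y x u.
have T4 := d_tri x y u. have T5 := d_tri y u v. have T6 := d_tri y v u.
have T7 := d_tri y x v. have T8 := d_tri x y v.
have E1 := d_edge Huv. have E3 := d_edge Hxy.
have E2 : d v u <= 1 by apply: d_edge; rewrite Hsym.
have E4 : d y x <= 1 by apply: d_edge; rewrite Hsym.
have Hxy' : x != y by apply/eqP => E; rewrite E Hirr in Hxy.
case: (eqVneq Exy Euv) => [EE|NE].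
  rewrite EE in Ex.
  have Hx : x \in [set u; v] by rewrite -Eu Ex set21.
  have Hy : y \in [set u; v] by rewrite -Eu Ex set22.
  case/set2P: Hx => Hx; case/set2P: Hy => Hy; subst x y;
    rewrite ?eqxx // in Hxy'; rewrite !d_refl in Heq.
  - have : d u v = 0 by lia. by move/d_eq0 => E; rewrite E eqxx in Hxy'.
  - have : d v u = 0 by lia. by move/d_eq0 => E; rewrite E eqxx in Hxy'.
have D : ds (inr Exy) (inr Euv) =
   (minn (2 * minn (d x u) (d x v)).+1 (2 * minn (d y u) (d y v)).+1).+1.
  rewrite ds_inr; last by apply/eqP => [[]] E; rewrite E eqxx in NE.
  rewrite !ds_inl /= (ends_eq (d (ends Exy).1) Eu) (ends_eq (d (ends Exy).2) Eu).
  congr S; exact: (ends_eq (fun z => (2 * minn (d z u) (d z v)).+1) Ex).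
rewrite A B C D. lia.
Qed.

End Sub.

Theorem lemma3p1 (T : finType) (g : rel T) :
  simple_graph g -> connected_graph g ->
  forall (x y u v : T) (Exy Euv : edge g),
    g x y -> g u v ->
    val Exy = [set x; y] -> val Euv = [set u; v] ->
    theta (subdiv_rel g) (inl x) (inr Exy) (inl u) (inr Euv) ->
    theta g x y u v.
Proof.
move=> [Hsym Hirr] Hconn. exact: key.
Qed.
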